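(* Suppose a black-white array (BWA) stores $n$ values (state variable $\mathtt{total}=n$), where $n$ is $k$-trailed, and a new value is inserted. Then: (a) the result of the $k$ recursive merges is held in the white segment of rank $k$, and it contains all the values that were in segments of rank smaller than $k$, together with the new value; (b) once the insertion is completed, all segments of rank smaller than $k$ are inactive; (c) if $n$ is strongly $k$-trailed, then after the insertion all values in the BWA are held in the segment of rank $k$.
   Context: A black-white array (BWA) of size $N=2^K$ stores values from a totally ordered set. It has a white array $W[1..N-1]$ and a black array $B[1..N/2-1]$. For $i\ge 0$, the segment of rank $i$ of either array is the block of indices $[2^i,2^{i+1}-1]$. An integer state variable $\mathtt{total}$ records the number of stored values and is initially $0$. The segment of rank $i$ is active iff bit $i$ of $\mathtt{total}$ equals $1$ (bits counted from the least significant bit, which is bit $0$). Between operations, all stored values are held in the active white segments, each sorted ascending. Insert$(v)$: if the rank-0 segment is inactive, set $W[1]=v$; otherwise set $B[1]=v$ and perform $\mathrm{merge}(0)$. $\mathrm{merge}(i)$: merge the sorted white and black segments of rank $i$ by a standard two-way merge. If the rank-$(i+1)$ segment is inactive, the sorted result is written into the white segment of rank $i+1$. Otherwise it is written into the black segment of rank $i+1$, and then $\mathrm{merge}(i+1)$ is performed. When an insertion completes, $\mathtt{total}$ has increased by one. A nonnegative integer $n$ is $k$-trailed if its binary form is $[b_{m-1},\dots,b_{k+1},0,1,\dots,1]$, with exactly $k$ trailing ones followed by a $0$ at bit $k$. It is strongly $k$-trailed if moreover $b_i=0$ for all $i>k$, i.e. $n=2^k-1$. *)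

(* Defs.v *)
From mathcomp Require Import all_boot all_order.
Set Implicit Arguments. Unset Strict Implicit. Unset Printing Implicit Defensive.
Import Order.TTheory.
Local Open Scope order_scope.

Section BWA.
Variables (d : Order.disp_t) (T : orderType d).

(* A BWA state: white array white, black array black (indexed by nat; only the
   indices 1..N-1 resp. 1..N/2-1 are meaningful), and the counter total. *)
Record bwa := Bwa { white : nat -> T; black : nat -> T; tot : nat }.

Definition bit (n i : nat) : bool := odd (n %/ 2 ^ i).

Definition active (s : bwa) (i : nat) : bool := bit (tot s) i.

Definition seg (A : nat -> T) (i : nat) : seq T :=
  map A (iota (2 ^ i) (2 ^ i)).

Definition write_seg (A : nat -> T) (i : nat) (m : seq T) : nat -> T :=
  fun j => if (2 ^ i <= j < 2 ^ i.+1)%N then nth (A j) m (j - 2 ^ i) else A j.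

Definition set_cell (A : nat -> T) (j : nat) (v : T) : nat -> T :=
  fun j' => if j' == j then v else A j'.

Fixpoint merge_from (fuel i : nat) (s : bwa) : bwa :=
  match fuel with
  | 0 => s
  | fuel'.+1 =>
    let m := merge (<=%O : rel T) (seg (white s) i) (seg (black s) i) in
    if active s i.+1 then
      merge_from fuel' i.+1 (Bwa (white s) (write_seg (black s) i.+1 m) (tot s))
    else Bwa (write_seg (white s) i.+1 m) (black s) (tot s)
  end.

(* Insert(v) in a BWA of size N = 2^K (fuel K suffices for the recursion). *)
Definition insert (K : nat) (s : bwa) (v : T) : bwa :=
  let s' := if ~~ active s 0 then Bwa (set_cell (white s) 1 v) (black s) (tot s)
            else merge_from K 0 (Bwa (white s) (set_cell (black s) 1 v) (tot s)) in
  Bwa (white s') (black s') (tot s).+1.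

Definition stored (K : nat) (s : bwa) : seq T :=
  flatten [seq seg (white s) i | i <- iota 0 K & active s i].

End BWA.

Definition k_trailed (k n : nat) : Prop :=
  (forall i, (i < k)%N -> bit n i) /\ ~~ bit n k.

Definition strongly_k_trailed (k n : nat) : Prop :=
  k_trailed k n /\ (forall i, (k < i)%N -> ~~ bit n i).

(* Main.v *)
Require Import Defs.
From mathcomp Require Import all_boot all_order.
From mathcomp Require Import zify.

Lemma bit0E n : bit n 0 = odd n.
Proof. by rewrite /bit expn0 divn1. Qed.

Lemma bitSE n i : bit n i.+1 = bit n./2 i.
Proof. by rewrite /bit expnS divnMA divn2. Qed.

Lemma bit_succ k : forall n, (forall i, (i < k)%N -> bit n i) -> ~~ bit n k ->
  forall i, bit n.+1 i = if (i < k)%N then false else if i == k then true else bit n i.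
Proof.
elim: k => [|k IH] n H1 H2 i.
- rewrite bit0E in H2. case: i => [|i]; first by rewrite bit0E /= (negbTE H2).
  rewrite /= !bitSE -uphalfE uphalf_half (negbTE H2) //.
- have on : odd n by rewrite -bit0E; apply: H1.
  case: i => [|i]; first by rewrite bit0E /= on.
  rewrite !bitSE -uphalfE uphalf_half on /= add1n.
  rewrite (IH n./2) //.
  + by move=> j hj; rewrite -bitSE; apply: H1.
  + by rewrite -bitSE.
Qed.
Section S.
Variables (d : Order.disp_t) (T : orderType d).

Lemma exp2S i : 2 ^ i.+1 = 2 ^ i + 2 ^ i.
Proof. by rewrite expnS mul2n addnn. Qed.

Lemma size_seg (A : nat -> T) i : size (seg A i) = 2 ^ i.
Proof. by rewrite /seg size_map size_iota. Qed.

Lemma seg_write_same (A : nat -> T) i m : size m = 2 ^ i -> seg (write_seg A i m) i = m.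
Proof.
move=> hs; rewrite /seg.
have -> : map (write_seg A i m) (iota (2 ^ i) (2 ^ i)) =
          map (fun j => nth (A j) m (j - 2 ^ i)) (iota (2 ^ i) (2 ^ i)).
  apply/eq_in_map => j; rewrite mem_iota /write_seg exp2S => ->; done.
apply: (@eq_from_nth _ (A 0)); first by rewrite size_map size_iota hs.
move=> j; rewrite size_map size_iota => hj.
rewrite (nth_map 0) ?size_iota // nth_iota // addKn.
by apply: set_nth_default; rewrite hs.
Qed.

Lemma seg_write_other (A : nat -> T) i l m : l != i -> seg (write_seg A i m) l = seg A l.
Proof.
move=> hne; rewrite /seg; apply/eq_in_map => j; rewrite mem_iota /write_seg => hj.
have h1 := exp2S l; have h2 := exp2S i.
case: (ltngtP l i) hne => // hli _.
- have : 2 ^ l.+1 <= 2 ^ i by apply: leq_pexp2l.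
  by move=> h; have -> : (2 ^ i <= j < 2 ^ i.+1) = false by lia.
- have : 2 ^ i.+1 <= 2 ^ l by apply: leq_pexp2l.
  by move=> h; have -> : (2 ^ i <= j < 2 ^ i.+1) = false by lia.
Qed.

Lemma merge_lemma (v : T) k : forall fuel i (s : bwa T),
  (i < k)%N -> (k - i <= fuel)%N ->
  (forall l, (i < l < k)%N -> bit (tot s) l) -> ~~ bit (tot s) k ->
  perm_eq (seg (black s) i) (v :: flatten [seq seg (white s) l | l <- iota 0 i]) ->
  let r := merge_from fuel i s in
  tot r = tot s /\ (forall l, l != k -> seg (white r) l = seg (white s) l) /\
  perm_eq (seg (white r) k) (v :: flatten [seq seg (white s) l | l <- iota 0 k]).
Proof.
elim=> [|f IH] i s hik hf hb hk hp /=; first by lia.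
set m := merge _ _ _.
have hm : size m = 2 ^ i.+1 by rewrite size_merge size_cat !size_seg exp2S.
have hpm : perm_eq m (v :: flatten [seq seg (white s) l | l <- iota 0 i.+1]).
  rewrite /m perm_merge -addn1 iotaD map_cat flatten_cat /= cats0 add0n.
  rewrite -cat1s catA perm_catC /=.
  by rewrite -cat_cons perm_cat2r.
case: ifP => ha.
- have hik1 : (i.+1 < k)%N.
    case: (ltngtP i.+1 k) => [//|h|e]; first lia.
    by move: ha; rewrite /active e (negbTE hk).
  have hb' : forall l, (i.+1 < l < k)%N -> bit (tot s) l by move=> l hl; apply: hb; lia.
  have hp' : perm_eq (seg (write_seg (black s) i.+1 m) i.+1)
     (v :: flatten [seq seg (white s) l | l <- iota 0 i.+1]) by rewrite seg_write_same.
  have [h1 [h2 h3]] := IH i.+1 (Bwa (white s) (write_seg (black s) i.+1 m) (tot s))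
     hik1 ltac:(simpl; lia) hb' hk hp'.
  by split; [done | split].
- have e : i.+1 = k.
    case: (ltngtP i.+1 k) => [h|h|//]; last lia.
    by move: ha; rewrite /active hb //; lia.
  split=> //; split.
  + by move=> l hl /=; rewrite seg_write_other // e.
  + by rewrite /= -e seg_write_same // hm.
Qed.
End S.

Theorem mainTheorem2 (d : Order.disp_t) (T : orderType d) (K : nat)
    (s : bwa T) (v : T) (n k : nat) :
  tot s = n ->
  (n.+1 < 2 ^ K)%N ->
  k_trailed k n ->
  let s' := insert K s v in
  (* (a) *)
  perm_eq (seg (white s') k) (v :: flatten [seq seg (white s) i | i <- iota 0 k])
  (* (b) *)
  /\ (forall i, (i < k)%N -> ~~ active s' i)
  (* (c) *)
  /\ (strongly_k_trailed k n ->
        stored K s' = seg (white s') k /\ perm_eq (stored K s') (v :: stored K s)).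
Proof.
move=> hn hK [hb hk] s'.
have hsucc := @bit_succ k n hb hk.
have htot : tot s' = n.+1 by rewrite /s' /insert /= hn.
have hkK : (k < K)%N.
  have := hsucc k; rewrite ltnn eqxx /bit => ho.
  have : (0 < n.+1 %/ 2 ^ k)%N by move: ho; case: (n.+1 %/ 2 ^ k).
  rewrite divn_gt0 ?expn_gt0 // => h.
  by rewrite -(@ltn_exp2l 2) //; apply: leq_ltn_trans hK.
have hA : perm_eq (seg (white s') k) (v :: flatten [seq seg (white s) i | i <- iota 0 k]).
  case: k hb hk hsucc hkK => [|k] hb hk hsucc hkK.
  - rewrite /s' /insert /=.
    have -> : active s 0 = false by rewrite /active hn; apply/negbTE.
    by rewrite /= /seg /= /set_cell eqxx.
  - rewrite /s' /insert /=.
    have -> : active s 0 = true by rewrite /active hn; apply: hb.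
    rewrite /=.
    have [_ [_ h3]] := @merge_lemma d T v k.+1 K 0
      (Bwa (white s) (set_cell (black s) 1 v) (tot s)) ltac:(by []) ltac:(lia)
      ltac:(by move=> l hl /=; rewrite hn; apply: hb; lia) ltac:(by rewrite /= hn)
      ltac:(by rewrite /= /seg /= /set_cell eqxx).
    exact: h3.
split; first exact: hA.
split.
  by move=> i hi; rewrite /active htot hsucc hi.
move=> [_ hs].
have e1 : stored K s' = seg (white s') k.
  rewrite /stored.
  have -> : [seq i <- iota 0 K | active s' i] = [:: k].
    rewrite -(@filter_pred1_uniq _ (iota 0 K) k) ?iota_uniq ?mem_iota //.
    apply: eq_filter => i; rewrite /active htot hsucc /=.
    case: (ltngtP i k) => // h.
    by rewrite (negbTE (hs i h)).
  by rewrite /= cats0.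
have e2 : stored K s = flatten [seq seg (white s) i | i <- iota 0 k].
  rewrite /stored.
  have -> : [seq i <- iota 0 K | active s i] = iota 0 k.
    rewrite -(@filter_iota_ltn 0 K k); last exact: ltnW.
    apply: eq_filter => i; rewrite /active hn add0n.
    case: (ltngtP i k) => h.
    + by rewrite hb.
    + by rewrite (negbTE (hs i h)).
    + by rewrite h (negbTE hk).
  by [].
by rewrite e1 e2.
Qed.
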